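(* Fix $d \geq 2$. If $c > (d+1)/2$ and $Y \sim Y_d(n, \frac{c\log n}{n})$, then with high probability $Y$ does not contain two isolated $(d-1)$-faces that share a common $(d-2)$-face.
   Context: $Y_d(n,p)$ is the random $d$-dimensional simplicial complex on $n$ vertices with complete $(d-1)$-skeleton in which each $d$-face is included independently with probability $p$. ''With high probability'' means with probability tending to $1$ as $n\to\infty$. A $(d-1)$-face is isolated if it is contained in no $d$-face of $Y$. *)

(* Defs.v *)
From HB Require Import structures.
From mathcomp Require Import all_boot all_order all_algebra.
From mathcomp Require Import all_classical all_reals all_analysis.
Set Implicit Arguments. Unset Strict Implicit. Unset Printing Implicit Defensive.
Import Order.TTheory GRing.Theory Num.Theory.
Local Open Scope ring_scope.

(* Vertices are 'I_n.  A k-face is a set of k+1 vertices.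
   Y_d(n,p) has complete (d-1)-skeleton, so it is determined by its set of
   d-faces Y, a subset of all (d+1)-element subsets of 'I_n. *)

Definition dfaces (n d : nat) : {set {set 'I_n}} :=
  [set s : {set 'I_n} | #|s| == d.+1].

Definition isolated (n d : nat) (Y : {set {set 'I_n}}) (s : {set 'I_n}) : bool :=
  (#|s| == d) && [forall t in Y, ~~ (s \subset t)].

Definition two_adjacent_isolated (n d : nat) (Y : {set {set 'I_n}}) : bool :=
  [exists s : {set 'I_n}, exists t : {set 'I_n}, exists r : {set 'I_n},
     [&& s != t, isolated d Y s, isolated d Y t, #|r| == d.-1,
         r \subset s & r \subset t]].

Definition Yprob {R : realType} (n d : nat) (p : R)
    (E : {set {set 'I_n}} -> bool) : R :=
  \sum_(Y in powerset (dfaces n d) | E Y)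
     p ^+ #|Y| * (1 - p) ^+ (#|dfaces n d| - #|Y|).

(* Main.v *)
Require Import Defs.
From HB Require Import structures.
From mathcomp Require Import all_boot all_order all_algebra.
From mathcomp Require Import all_classical all_reals all_analysis.
From mathcomp Require Import zify ring lra.
Import Order.TTheory GRing.Theory Num.Theory.
Import numFieldNormedType.Exports.
Local Open Scope classical_set_scope.
Local Open Scope ring_scope.
Set Implicit Arguments. Unset Strict Implicit.
Section Prob.
Variables (R : realType) (n d : nat) (p : R).
Hypotheses (p0 : 0 <= p) (p1 : p <= 1).

Let w (Y : {set {set 'I_n}}) : R := p ^+ #|Y| * (1 - p) ^+ (#|dfaces n d| - #|Y|).

Lemma w_ge0 Y : 0 <= w Y.
Proof. by rewrite /w mulr_ge0 // exprn_ge0 // subr_ge0. Qed.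

Lemma Yprob_mono (E E' : {set {set 'I_n}} -> bool) :
  (forall Y : {set {set 'I_n}}, Y \subset dfaces n d -> E Y -> E' Y) ->
  @Yprob R n d p E <= @Yprob R n d p E'.
Proof.
move=> H; rewrite /Yprob !big_mkcondr /=; apply: ler_sum. move=> Y.
rewrite powersetE => HY; case EY: (E Y); first by rewrite (H _ HY EY) lexx.
by case: (E' Y) => //; exact: w_ge0.
Qed.

Lemma Yprob_false (E : {set {set 'I_n}} -> bool) :
  (forall Y, ~~ E Y) -> @Yprob R n d p E = 0.
Proof.
move=> H; rewrite /Yprob big_mkcondr /= big1 // => Y _.
by rewrite (negbTE (H Y)).
Qed.

Lemma Yprob_union (I : finType) (P : pred I) (Ei : I -> {set {set 'I_n}} -> bool)
  (E : {set {set 'I_n}} -> bool) :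
  (forall Y : {set {set 'I_n}}, Y \subset dfaces n d -> E Y -> exists i, P i && Ei i Y) ->
  @Yprob R n d p E <= \sum_(i | P i) @Yprob R n d p (Ei i).
Proof.
move=> H; rewrite /Yprob.
under [X in _ <= X]eq_bigr => i _ do rewrite big_mkcondr.
rewrite exchange_big /= big_mkcondr /=; apply: ler_sum => Y.
rewrite powersetE => HY; case EY: (E Y); last first.
  by apply: sumr_ge0 => i _; case: (Ei i Y) => //; exact: w_ge0.
have [i /andP[Pi Ei_Y]] := H _ HY EY.
rewrite (bigD1 i) //= Ei_Y lerDl; apply: sumr_ge0 => j _.
by case: (Ei j Y) => //; exact: w_ge0.
Qed.

Lemma Yprob_avoid (F : {set {set 'I_n}}) : F \subset dfaces n d ->
  @Yprob R n d p (fun Y => Y :&: F == finset.set0) = (1 - p) ^+ #|F|.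
Proof.
move=> FD; set D := dfaces n d.
pose a (i : {set 'I_n}) : R := if (i \in D) && (i \notin F) then p else 0.
pose b (i : {set 'I_n}) : R := if i \in D then 1 - p else 1.
have step1 : \prod_i (a i + b i) = (1 - p) ^+ #|F|.
  rewrite (bigID (mem F)) /=.
  rewrite [X in _ * X]big1 ?mulr1; last first.
    by move=> i iF; rewrite /a /b iF andbT; case: (i \in D); rewrite ?subrKC ?add0r.
  rewrite -prodr_const; apply: eq_bigr => i iF.
  by rewrite /a /b iF (fintype.subsetP FD i iF) /= add0r.
rewrite -step1 bigA_distr /=.
rewrite /Yprob big_mkcond /=; apply: eq_bigr => J _.
rewrite powersetE.
case: ifP => [/andP[JD /eqP JF] | Hn].
  rewrite (bigID (mem J)) /=; congr (_ * _).
    rewrite -prodr_const; apply: eq_bigr => i iJ.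
    rewrite /a (fintype.subsetP JD i iJ) /=.
    have -> : i \notin F.
      apply/negP => iF; have : i \in J :&: F by rewrite inE iJ iF.
      by rewrite JF inE.
    by rewrite iJ.
  rewrite (bigID (mem D)) /= [X in _ * X]big1 ?mulr1; last first.
    by move=> i /andP[/negbTE iJ /negbTE iD]; rewrite iJ /b iD.
  have -> : (#|D| - #|J|)%N = #|D :\: J|.
    by rewrite cardsD (finset.setIidPr JD).
  rewrite -prodr_const; symmetry; apply: eq_big => [i|i]; first by rewrite finset.in_setD.
  by move=> /andP[/negbTE iJ iD]; rewrite iJ /b iD.
have [i iJ ai0] : exists2 i, i \in J & a i = 0.
  move/negbT: Hn; rewrite negb_and => /orP[/fintype.subsetPn[i iJ iD]|/finset.set0Pn[i]].
    by exists i => //; rewrite /a (negbTE iD).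
  rewrite inE => /andP[iJ iF]; exists i => //; by rewrite /a iF andbF.
by rewrite (bigD1 i) //= iJ ai0 mul0r.
Qed.
End Prob.
Lemma bin_le_exp (n m : nat) : ('C(n, m) <= n ^ m)%N.
Proof.
elim: n m => [|n IH] [|m] //=; try by rewrite ?bin0 ?bin0n.
rewrite binS; apply: leq_trans (leq_add (IH m.+1) (IH m)) _.
rewrite expnS [X in (_ <= X)%N]expnS.
have h : (n ^ m <= n.+1 ^ m)%N.
  by case: m {IH} => [//|m]; rewrite leq_exp2r.
nia.
Qed.

Lemma card_F_lb n d (s t : {set 'I_n}) : #|s| = d -> #|t| = d -> s != t ->
  (2 * (n - 2 * d) <= #|[set u in dfaces n d | (s \subset u) || (t \subset u)]|)%N.
Proof.
move=> cs ct st.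
set X := ~: (s :|: t).
have cX : (n - 2 * d <= #|X|)%N.
  have := cardsC (s :|: t); rewrite card_ord -/X => h.
  have := cardsUI s t; rewrite cs ct; lia.
have inj (z : {set 'I_n}) : z \subset s :|: t -> {in X &, injective (fun v => v |: z)}.
  move=> zst v w vX wX e.
  have : v \in w |: z by rewrite -e setU11.
  rewrite in_setU1 => /orP[/eqP //|vz].
  by move: vX; rewrite inE (fintype.subsetP zst v vz).
set A := (fun v => v |: s) @: X; set B := (fun v => v |: t) @: X.
have cA : #|A| = #|X| by exact: card_in_imset (inj _ (finset.subsetUl _ _)).
have cB : #|B| = #|X| by exact: card_in_imset (inj _ (finset.subsetUr _ _)).
have AB : A :&: B = finset.set0.
  apply/eqP; rewrite -finset.subset0; apply/fintype.subsetP => u; rewrite inE.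
  case/andP=> /imsetP[v vX ->] /imsetP[w wX e].
  have vt : v \notin t by move: vX; rewrite !inE negb_or => /andP[].
  have ts : t \subset s.
    apply/fintype.subsetP => x xt.
    have : x \in v |: s by rewrite e in_setU1 xt orbT.
    rewrite in_setU1 => /orP[/eqP xv|//].
    by move: vt; rewrite -xv xt.
  have : t == s by rewrite eqEcard ts cs ct leqnn.
  by rewrite eq_sym (negbTE st).
have sub : A :|: B \subset [set u in dfaces n d | (s \subset u) || (t \subset u)].
  apply/fintype.subsetP => u; rewrite inE => /orP[] /imsetP[v vX ->]; rewrite !inE.
    have vs : v \notin s by move: vX; rewrite !inE negb_or => /andP[].
    by rewrite cardsU1 vs cs subsetU1 add1n eqxx.
  have vt : v \notin t by move: vX; rewrite !inE negb_or => /andP[].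
  by rewrite cardsU1 vt ct subsetU1 orbT add1n eqxx.
have := subset_leq_card sub; have := cardsUI A B; rewrite AB cards0 cA cB => h1 _.
apply: leq_trans _ (subset_leq_card sub); rewrite addn0 in h1; rewrite h1 mul2n -addnn; exact: (leq_add cX cX).
Qed.

Lemma add1_eq (T : finType) (r s : {set T}) : r \subset s -> #|s| = #|r|.+1 ->
  exists a, s = a |: r.
Proof.
move=> rs cs.
have : (0 < #|s :\: r|)%N by rewrite cardsD (finset.setIidPr rs) cs subSnn.
rewrite card_gt0 => /finset.set0Pn[a]; rewrite finset.in_setD => /andP[ar asx].
exists a; apply/eqP; rewrite eq_sym eqEcard cardsU1 ar cs leqnn andbT.
by rewrite finset.subUset finset.sub1set asx rs.
Qed.
Set Implicit Arguments. Unset Strict Implicit.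

Definition Gev n d (x : {set 'I_n} * 'I_n * 'I_n) (Y : {set {set 'I_n}}) : bool :=
  [&& x.1.2 |: x.1.1 != x.2 |: x.1.1, Defs.isolated d Y (x.1.2 |: x.1.1)
    & Defs.isolated d Y (x.2 |: x.1.1)].
Arguments Gev {n}.

Lemma reduce n d (Y : {set {set 'I_n}}) : (1 <= d)%N -> two_adjacent_isolated d Y ->
  exists x : {set 'I_n} * 'I_n * 'I_n, (#|x.1.1| == d.-1) && Gev d x Y.
Proof.
move=> d1 /existsP[s /existsP[t /existsP[r /and5P[st iss ist /eqP cr /andP[rs rt]]]]].
have cs : #|s| = #|r|.+1 by move: iss => /andP[/eqP -> _]; rewrite cr prednK.
have ct : #|t| = #|r|.+1 by move: ist => /andP[/eqP -> _]; rewrite cr prednK.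
have [a sE] := add1_eq rs cs; have [b tE] := add1_eq rt ct; subst s t.
by exists (r, a, b); rewrite /Gev /= cr eqxx st iss ist.
Qed.

Lemma triple_bound (R : realType) n d (p : R) (x : {set 'I_n} * 'I_n * 'I_n) :
  0 <= p -> p <= 1 ->
  @Yprob R n d p (Gev d x) <= (1 - p) ^+ (2 * (n - 2 * d)).
Proof.
move=> p0 p1; case: x => [[r a] b].
set s := a |: r; set t := b |: r.
have q0 : 0 <= 1 - p by rewrite subr_ge0.
case H : [&& s != t, #|s| == d & #|t| == d]; last first.
  rewrite Yprob_false ?exprn_ge0 // => Y; apply/negP; rewrite /Gev /=.
  case/and3P=> st /andP[cs _] /andP[ct _].
  by move: H; rewrite st cs ct.
case/and3P: H => st /eqP cs /eqP ct.
set F := [set u in dfaces n d | (s \subset u) || (t \subset u)].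
have FD : F \subset dfaces n d.
  by apply/fintype.subsetP => u; rewrite inE => /andP[].
apply: le_trans (Yprob_mono p0 p1 (E' := fun Y => Y :&: F == finset.set0) _) _.
  move=> Y _; rewrite /Gev /= => /and3P[_ /andP[_ /forall_inP hs] /andP[_ /forall_inP ht]].
  rewrite -finset.subset0; apply/fintype.subsetP => u.
  rewrite !inE => /and3P[uY _ /orP[su|tu]].
    by move: (hs u uY); rewrite su.
  by move: (ht u uY); rewrite tu.
rewrite Yprob_avoid //; apply: ler_wiXn2l => //; first by rewrite lerBlDr lerDl.
exact: card_F_lb.
Qed.

Lemma total_bound (R : realType) n d (p : R) : 0 <= p -> p <= 1 -> (1 <= d)%N ->
  @Yprob R n d p (two_adjacent_isolated d) <=
  ('C(n, d.-1) * n * n)%:R * (1 - p) ^+ (2 * (n - 2 * d)).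
Proof.
move=> p0 p1 d1.
apply: le_trans (Yprob_union p0 p1 (P := fun x : {set 'I_n} * 'I_n * 'I_n => #|x.1.1| == d.-1)
   (Ei := Gev d) _) _.
  by move=> Y _ HY; exact: reduce.
apply: le_trans (_ : _ <= \sum_(x : {set 'I_n} * 'I_n * 'I_n | #|x.1.1| == d.-1)
   (1 - p) ^+ (2 * (n - 2 * d))) _.
  by apply: ler_sum => x _; exact: triple_bound.
set S := finset (fun x : {set 'I_n} * 'I_n * 'I_n => #|x.1.1| == d.-1).
rewrite (eq_bigl (fun x => x \in S)); last by move=> x; rewrite inE.
rewrite sumr_const.
have -> : #|S| = ('C(n, d.-1) * n * n)%N.
  have -> : S = finset.setX (finset.setX (finset (fun r : {set 'I_n} => #|r| == d.-1)) finset.setT) finset.setT.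
    apply/finset.setP => -[[r a] b]; by rewrite !inE !andbT.
  by rewrite !cardsX card_draws !cardsT card_ord.
by rewrite mulr_natl.
Qed.

Lemma nat_bound n d : (1 <= d)%N -> ('C(n, d.-1) * n * n <= n ^ d.+1)%N.
Proof.
move=> d1; have e : (n ^ d.+1 = n ^ d.-1 * n * n)%N.
  by rewrite -(prednK d1) /= !expnSr.
by rewrite e !leq_mul // bin_le_exp.
Qed.

Lemma Yprob_ge0 (R : realType) n d (p : R) E : 0 <= p -> p <= 1 -> 0 <= @Yprob R n d p E.
Proof. by move=> p0 p1; apply: sumr_ge0 => Y _; exact: w_ge0. Qed.

Lemma main_bound (R : realType) d (c : R) (n : nat) : (1 <= d)%N -> 0 < c ->
  2 <= n%:R :> R -> c * ln n%:R <= n%:R -> (2 * d)%:R <= n%:R :> R ->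
  4 * c * d%:R <= (2 * c - d.+1%:R) / 2 * n%:R ->
  @Yprob R n d (c * ln (n%:R) / n%:R) (two_adjacent_isolated d) <=
  expR (- ((2 * c - d.+1%:R) / 2 * ln n%:R)).
Proof.
move=> d1 c0 n2 hcl hd he.
set L := ln n%:R; set e := (2 * c - d.+1%:R) / 2.
have n0 : 0 < n%:R :> R by apply: lt_le_trans n2.
have L0 : 0 <= L by apply: ln_ge0; apply: le_trans n2; rewrite ler1n.
set p := c * L / n%:R.
have p0 : 0 <= p by rewrite /p divr_ge0 // ?mulr_ge0 // ltW.
have p1 : p <= 1 by rewrite /p ler_pdivrMr // mul1r.
have d2n : (2 * d <= n)%N by rewrite -(ler_nat R).
apply: le_trans (total_bound n p0 p1 d1) _.
set K := (2 * (n - 2 * d))%N.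
have qK0 : 0 <= (1 - p) ^+ K by rewrite exprn_ge0 // subr_ge0.
apply: le_trans (_ : n%:R ^+ d.+1 * (1 - p) ^+ K <= _).
  by rewrite ler_wpM2r // -natrX ler_nat nat_bound.
have E1 : n%:R ^+ d.+1 = expR (d.+1%:R * L) by rewrite expRM_natl lnK // posrE.
have E2 : (1 - p) ^+ K <= expR (- p * K%:R).
  rewrite expRM_natr; apply: lerXn2r; rewrite ?nnegrE ?expR_ge0 ?subr_ge0 //.
  exact: expR_ge1Dx.
apply: le_trans (_ : expR (d.+1%:R * L) * expR (- p * K%:R) <= _).
  by rewrite E1 ler_wpM2l // expR_ge0.
rewrite -expRD ler_expR.
have KE : K%:R = 2 * (n%:R - 2 * d%:R) :> R.
  by rewrite /K natrM natrB // natrM.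
rewrite KE.
have pE : - p * (2 * (n%:R - 2 * d%:R)) = - (2 * c * L) + 4 * c * d%:R * L / n%:R.
  by rewrite /p; field; rewrite gt_eqF.
rewrite pE.
have key : 4 * c * d%:R * L / n%:R <= e * L.
  rewrite mulrAC ler_wpM2r //  ler_pdivrMr //.
rewrite /e in key *.
nra.
Qed.

Lemma cln_le (R : realType) (c x : R) : 0 < c -> 1 <= x -> 2 * c ^+ 2 <= x ->
  c * ln x <= x.
Proof.
move=> c0 x1 x2.
have x0 : 0 < x by apply: lt_le_trans x1.
case: (leP (ln x) (2 * c)) => h.
  nra.
have := expR_ge1Dxn 1 (ln_ge0 x1); rewrite lnK ?posrE // => hx.
have f : (2`!)%:R = 2 :> R by [].
rewrite f in hx.
nra.
Qed.

Unset Implicit Arguments.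
Theorem lemma5 (R : realType) (d : nat) (c : R) :
  (2 <= d)%N -> (d.+1)%:R / 2 < c ->
  (fun n : nat => @Yprob R n d (c * ln (n%:R) / n%:R) (@two_adjacent_isolated n d))
    @ \oo --> (0 : R).
Proof.
move=> d2 hc.
have d1 : (1 <= d)%N by apply: leq_trans d2.
have c0 : 0 < c by apply: lt_trans hc; rewrite divr_gt0.
set e := (2 * c - d.+1%:R) / 2.
have e0 : 0 < e by rewrite /e; lra.
apply: (@squeeze_cvgr _ _ _ _ (fun _ => 0) (fun n : nat => expR (- (e * ln n%:R)))).
- near=> n.
  have n2 : 2 <= n%:R :> R by near: n; exact: nbhs_infty_ger.
  have h1 : 1 <= n%:R :> R by near: n; exact: nbhs_infty_ger.
  have h2 : 2 * c ^+ 2 <= n%:R :> R by near: n; exact: nbhs_infty_ger.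
  have hd : (2 * d)%:R <= n%:R :> R by near: n; exact: nbhs_infty_ger.
  have h3 : 4 * c * d%:R / e <= n%:R :> R by near: n; exact: nbhs_infty_ger.
  have hcl := cln_le c0 h1 h2.
  have he : 4 * c * d%:R <= e * n%:R by rewrite [e * _]mulrC -ler_pdivrMr.
  have n0 : 0 < n%:R :> R by apply: lt_le_trans h1.
  have p0 : 0 <= c * ln n%:R / n%:R by rewrite divr_ge0 // ?mulr_ge0 // ?ln_ge0 // ltW.
  have p1 : c * ln n%:R / n%:R <= 1 by rewrite ler_pdivrMr // mul1r.
  apply/andP; split; first exact: Yprob_ge0.
  exact: main_bound.
- exact: cvg_cst.
- apply: (@cvg_comp _ _ _ (fun n : nat => e * ln n%:R) (fun x => expR (- x)) _ (pinfty_nbhs R)); last exact: cvgr_expR.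
  apply/cvgryPge => A.
  near=> n.
  have h : expR (A / e) <= n%:R by near: n; exact: nbhs_infty_ger.
  have : ln (expR (A / e)) <= ln n%:R.
    by rewrite ler_ln ?posrE ?expR_gt0 // (lt_le_trans (expR_gt0 _) h).
  rewrite expRK => hl.
  have := ler_wpM2l (ltW e0) hl; rewrite mulrC divfK ?gt_eqF //.
Unshelve. all: end_near.
Qed.
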